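(* Let $\mathbb{K}$ be a field of characteristic zero and let $\mathbb{K}(x)[S_x]$ be the ring of linear recurrence operators, in which $S_x\, a(x) = a(x+1)\, S_x$ for $a\in\mathbb{K}(x)$. Let $m$ be a positive integer and let $L\in\mathbb{K}(x)[S_x]$ be nonzero, with $m$-exponent separation $L=L_0+L_1+\cdots+L_{m-1}$, where $L_i=\sum_{j=0}^{r_i}\ell_{i,j}S_x^{jm+i}$ with $\ell_{i,j}\in\mathbb{K}(x)$. Let $\mathcal{L}_m$ be the $m\times m$ matrix over $\mathbb{K}(x)[S_x]$ whose entry in row $i$ and column $j$ ($0\le i,j\le m-1$) is $L_{(i-j)\bmod m}$. Suppose $T_0,\ldots,T_{m-1}\in\mathbb{K}(x)[S_x]$ satisfy $[T_0,\ldots,T_{m-1}]\cdot\mathcal{L}_m=0$, i.e. $\sum_{i=0}^{m-1}T_i L_{(i-j)\bmod m}=0$ for every $j=0,\ldots,m-1$. Then $T_k=0$ for every $k=0,\ldots,m-1$.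
   Context: Products of operators are taken in the noncommutative ring $\mathbb{K}(x)[S_x]$, with row-vector entries multiplied on the left. *)

(* Defs.v *)
From HB Require Import structures.
From mathcomp Require Import all_boot all_order all_algebra.
Set Implicit Arguments. Unset Strict Implicit. Unset Printing Implicit Defensive.
Import Order.TTheory GRing.Theory Num.Theory.
Local Open Scope ring_scope.
Local Notation tofrac := (@FracField.tofrac _).
Local Notation "x %:F" := (tofrac x).

Notation ratf K := {fraction {poly K}}.

Definition shiftf (K : fieldType) (f : ratf K) : ratf K :=
  let r := repr f in
  ((\n_r) \Po ('X + 1))%:F / ((\d_r) \Po ('X + 1))%:F.

Definition shiftn (K : fieldType) (i : nat) (f : ratf K) : ratf K :=
  iter i (@shiftf K) f.

(* Recurrence operators in K(x)[S_x] are represented by their coefficient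
   polynomial: p = \sum_i p`_i S_x^i  is stored as \sum_i p`_i 'X^i.
   Addition is that of polynomials; multiplication is the Ore product
   (a S^i)(b S^j) = a sigma^i(b) S^(i+j). *)
Definition oper (K : fieldType) := {poly ratf K}.

Definition omul (K : fieldType) (p q : oper K) : oper K :=
  \sum_(i < size p) \sum_(j < size q)
     (p`_i * shiftn i q`_j) *: 'X^(i + j).

Definition expsep (K : fieldType) (m i : nat) (L : oper K) : oper K :=
  \poly_(k < size L) (if (k %% m == i)%N then L`_k else 0).

(* Main.v *)
Require Import Defs.
From HB Require Import structures.
From mathcomp Require Import all_boot all_order all_algebra zify.
Import Order.TTheory GRing.Theory Num.Theory.
Local Open Scope ring_scope.
Local Open Scope quotient_scope.
Lemma repr_num0 (R : idomainType) (f : {fraction R}) : (\n_(repr f) == 0) = (f == 0).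
Proof.
rewrite FracField.numer0.
rewrite -[in RHS](reprK f).
have -> : (0 : {fraction R}) = \pi_({fraction R}) (@ratio0 R).
  rewrite -[LHS]/(FracField.tofrac 0). unlock FracField.tofrac. rewrite /=.
  congr (\pi _). apply: val_inj => /=. rewrite /Ratio /insubd insubT //= oner_neq0 //.
by [].
Qed.

Lemma sizeX1 (K : fieldType) : size ('X + 1 : {poly K}) = 2.
Proof. by rewrite -polyC1 size_XaddC. Qed.

Lemma shiftf0 (K : fieldType) : shiftf (0 : ratf K) = 0.
Proof.
rewrite /shiftf. have /eqP -> : \n_(repr (0 : ratf K)) == 0 by rewrite repr_num0.
by rewrite comp_poly0 rmorph0 mul0r.
Qed.

Lemma shiftf_eq0 (K : fieldType) (f : ratf K) : (shiftf f == 0) = (f == 0).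
Proof.
apply/idP/idP; last by move/eqP->; rewrite shiftf0.
rewrite /shiftf mulf_eq0 invr_eq0 !tofrac_eq0 !comp_poly2_eq0 ?sizeX1 //.
have /negbTE -> := denom_ratioP (repr f).
by rewrite orbF repr_num0.
Qed.
Lemma shiftnS (K : fieldType) i (f : ratf K) : shiftn i.+1 f = shiftf (shiftn i f).
Proof. by rewrite /shiftn iterS. Qed.

Lemma shiftn0 (K : fieldType) i : shiftn i (0 : ratf K) = 0.
Proof. elim: i => [|i IH]; first exact: erefl. by rewrite shiftnS IH shiftf0. Qed.

Lemma shiftn_eq0 (K : fieldType) i (f : ratf K) : (shiftn i f == 0) = (f == 0).
Proof. elim: i => [|i IH]; first exact: erefl. by rewrite shiftnS shiftf_eq0 IH. Qed.
Lemma sum_ext (V : zmodType) (F : nat -> V) a b :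
  (a <= b)%N -> (forall i, (a <= i)%N -> (i < b)%N -> F i = 0) ->
  \sum_(0 <= i < a) F i = \sum_(0 <= i < b) F i.
Proof.
move=> ab H; rewrite [RHS](@big_cat_nat _ _ _ a 0 b) //=.
rewrite [X in _ = _ + X]big_nat_cond [X in _ = _ + X]big1 ?addr0 // => i /andP[/andP[ai ib] _].
exact: H.
Qed.

Lemma coef_omul (K : fieldType) (p q : oper K) n :
  (omul p q)`_n = \sum_(k < n.+1) p`_k * shiftn k q`_(n - k).
Proof.
rewrite /omul coef_sum.
have inner : forall i : nat, (\sum_(j < size q) (p`_i * shiftn i q`_j) *: 'X^(i+j))`_n
    = if (i <= n)%N then p`_i * shiftn i q`_(n-i) else 0.
  move=> i; rewrite coef_sum.
  under eq_bigr => j _ do rewrite coefZ coefXn.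
  case: (leqP i n) => [le|lt].
    case: (ltnP (n-i) (size q)) => [lt2|ge2].
      rewrite (bigD1 (Ordinal lt2)) //= subnKC // eqxx mulr1 big1 ?addr0 // => j ne.
      case: eqP => E; last by rewrite mulr0.
      by case/eqP: ne; apply: val_inj => /=; rewrite E addKn.
    rewrite (nth_default _ ge2) shiftn0 mulr0 big1 // => j _.
    case: eqP => E; last by rewrite mulr0.
    by move: (ltn_ord j) ge2; rewrite E; lia.
  rewrite big1 // => j _; case: eqP => E; last by rewrite mulr0.
  by move: lt; rewrite E ltnNge leq_addr.
under eq_bigr => i _ do rewrite inner.
set G := fun i : nat => if (i <= n)%N then p`_i * shiftn i q`_(n-i) else 0.
rewrite -(big_mkord xpredT G) -(big_mkord xpredT (fun k => p`_k * shiftn k q`_(n - k))).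
rewrite (@sum_ext _ G (size p) (maxn (size p) n.+1)) ?leq_maxl //; last first.
  by move=> i si _; rewrite /G nth_default // mul0r if_same.
rewrite -(@sum_ext _ G n.+1 (maxn (size p) n.+1)) ?leq_maxr //; last first.
  by move=> i si _; rewrite /G leqNgt si.
by apply: eq_big_nat => i /andP[_ ilt]; rewrite /G -ltnS ilt.
Qed.

Lemma omul_neq0 (K : fieldType) (p q : oper K) : p != 0 -> q != 0 -> omul p q != 0.
Proof.
move=> p0 q0; set a := (size p).-1; set b := (size q).-1.
have sp : size p = a.+1 by rewrite /a prednK // size_poly_gt0.
have sq : size q = b.+1 by rewrite /b prednK // size_poly_gt0.
apply/eqP => /(congr1 (fun r : oper K => r`_(a + b))).
rewrite coef_omul coef0.
have alt : (a < (a + b).+1)%N by rewrite ltnS leq_addr.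
rewrite (bigD1 (Ordinal alt)) //= addKn big1 ?addr0.
  move/eqP; rewrite mulf_eq0 shiftn_eq0 /a /b -!lead_coefE !lead_coef_eq0.
  by rewrite (negbTE p0) (negbTE q0).
move=> k ne; case: (ltngtP k a) => [lt|gt|eq].
- by rewrite (nth_default _ (_ : size q <= _)%N) ?shiftn0 ?mulr0 //; lia.
- by rewrite (nth_default _ (_ : size p <= _)%N) ?mul0r //; lia.
- by case/eqP: ne; apply: val_inj.
Qed.

Section ModC.
Local Open Scope nat_scope.
Lemma modcond (m i k n s : nat) : (0 < m)%N -> (i < m)%N -> (k <= n)%N ->
  ((n - k) %% m == (i + m - (s + m - n %% m) %% m) %% m)
  = (i == (s + m - k %% m) %% m).
Proof.
move=> m0 im kn.
set j := (s + m - n %% m) %% m.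
have jm : (j < m)%N by rewrite ltn_pmod.
have nm : (n %% m < m)%N by rewrite ltn_pmod.
have km : (k %% m < m)%N by rewrite ltn_pmod.
have L : (n - k + (k + j)) %% m = s %% m.
  have -> : n - k + (k + j) = n + j by lia.
  rewrite /j modnDmr -modnDml.
  have -> : n %% m + (s + m - n %% m) = s + m by lia.
  by rewrite modnDr.
have R : (i + m - j + (k + j)) %% m = (i + k) %% m.
  have -> : i + m - j + (k + j) = (i + k) + m by lia.
  by rewrite modnDr.
rewrite -(eqn_modDr (k + j)) L R.
have E : s + m - k %% m + k %% m = s + m.
  by rewrite subnK // (leq_trans (ltnW km)) // leq_addl.
rewrite -(modnDr s m) -{1}E.
rewrite modnDmr eqn_modDr (modn_small im) eq_sym //.
Qed.

Lemma modback (m k n : nat) : (0 < m)%N -> (k < m)%N -> ((k + n + m - n %% m) %% m = k)%N.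
Proof.
move=> m0 km.
have -> : (k + n + m - n %% m = (n %/ m).+1 * m + k)%N.
  rewrite {1}(divn_eq n m) mulSn; move: (n %/ m * m)%N (n %% m) => Q r; lia.
by rewrite modnMDl modn_small.
Qed.
End ModC.

Local Close Scope quotient_scope.

Theorem proposition4p2 (K : fieldType) (charK0 : [pchar K] =i pred0)
  (m : nat) (m_gt0 : (0 < m)%N) (L : oper K) (L_neq0 : L != 0)
  (T : 'I_m -> oper K) :
  (forall j : 'I_m,
     \sum_(i < m) omul (T i) (expsep m ((i + m - j) %% m) L) = 0) ->
  forall k : 'I_m, T k = 0.
Proof.
move=> H.
pose a (s k : nat) : 'I_m := Ordinal (ltn_pmod (s + m - k %% m) m_gt0).
pose N := (\max_(i < m) size (T i))%N.
pose W (s : nat) : oper K := \poly_(k < N) (T (a s k))`_k.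
have coefW s k : (W s)`_k = (T (a s k))`_k.
  rewrite coef_poly; case: ltnP => // Nk.
  by rewrite nth_default //; exact: leq_trans (leq_bigmax _) Nk.
have W0 s : W s = 0.
  have WL : omul (W s) L = 0.
    apply/polyP => n; rewrite coef0 coef_omul.
    pose j : 'I_m := Ordinal (ltn_pmod (s + m - n %% m) m_gt0).
    have := congr1 (fun p : oper K => p`_n) (H j).
    rewrite coef_sum coef0 /= => HH; apply: (etrans _ HH).
    under [RHS]eq_bigr => i _ do rewrite coef_omul.
    rewrite exchange_big /=; apply: eq_bigr => k _.
    rewrite coefW (bigD1 (a s k)) //= big1 ?addr0.
      rewrite /expsep coef_poly modcond ?ltn_pmod // ?eqxx; last by rewrite -ltnS ltn_ord.
      by case: (ltnP (n - k) (size L)) => // sL; rewrite (nth_default _ sL).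
    move=> i ne; rewrite /expsep coef_poly modcond ?ltn_pmod //; last by rewrite -ltnS ltn_ord.
    have -> : ((i : nat) == (s + m - k %% m) %% m)%N = false.
      by apply/negbTE; apply: contra ne => /eqP E; apply/eqP/val_inj.
    by rewrite if_same shiftn0 mulr0.
  case: (eqVneq (W s) 0) => // Wn.
  by have := @omul_neq0 _ _ _ Wn L_neq0; rewrite WL eqxx.
move=> k; apply/polyP => n; rewrite coef0.
have -> : k = a (k + n)%N n by apply: val_inj; rewrite /= modback.
by rewrite -coefW W0 coef0.
Qed.
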